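(* Let $S$ be a semigroup with involution, $I\in\mathbb{H}$ an imaginary unit, and $\phi:S\to\mathbb{C}_I$. Then $\phi$ is complex positive definite (i.e. $\sum_{i,j=1}^n\overline{c_i}c_j\phi(s_i^*\circ s_j)\ge0$ for all $n$, $s_i\in S$, $c_i\in\mathbb{C}_I$) if and only if $\phi$ is quaternionic positive definite.
   Context: $\mathbb{H}$ is the real quaternion algebra. An imaginary unit is a quaternion $I$ with $\overline I=-I$ and $|I|=1$ (so $I^2=-1$); $\mathbb{C}_I=\mathbb{R}\oplus I\mathbb{R}$ is the corresponding complex slice. A semigroup with involution is a set $S$ with an associative binary operation $\circ$ with neutral element $e$ and a bijection $s\mapsto s^*$ with $(s^* )^*=s$, $(s\circ t)^*=t^*\circ s^*$. $\phi:S\to\mathbb{H}$ is quaternionic positive definite if $\sum_{i,j=1}^k \overline{q_i}\phi(s_i^*\circ s_j)q_j$ is a nonnegative real number for all $k$, $s_i\in S$, $q_i\in\mathbb{H}$. *)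

(* Defs.v *)
From mathcomp Require Import all_boot all_order all_algebra.
From mathcomp Require Import reals.
Set Implicit Arguments. Unset Strict Implicit. Unset Printing Implicit Defensive.
Import Order.TTheory GRing.Theory Num.Theory.
Local Open Scope ring_scope.

Record quat (R : realType) := Quat { qre : R; qi : R; qj : R; qk : R }.

Section Quat.
Variable R : realType.
Definition qzero : quat R := Quat 0 0 0 0.
Definition qadd (p q : quat R) : quat R :=
  Quat (qre p + qre q) (qi p + qi q) (qj p + qj q) (qk p + qk q).
Definition qopp (p : quat R) : quat R := Quat (- qre p) (- qi p) (- qj p) (- qk p).
Definition qmul (p q : quat R) : quat R :=
  Quat (qre p * qre q - qi p * qi q - qj p * qj q - qk p * qk q)
       (qre p * qi q + qi p * qre q + qj p * qk q - qk p * qj q)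
       (qre p * qj q - qi p * qk q + qj p * qre q + qk p * qi q)
       (qre p * qk q + qi p * qj q - qj p * qi q + qk p * qre q).
Definition qconj (p : quat R) : quat R := Quat (qre p) (- qi p) (- qj p) (- qk p).
Definition qreal (a : R) : quat R := Quat a 0 0 0.
Definition qnorm2 (p : quat R) : R := qre p ^+ 2 + qi p ^+ 2 + qj p ^+ 2 + qk p ^+ 2.

Definition imag_unit (I : quat R) : Prop := qconj I = qopp I /\ qnorm2 I = 1.
Definition in_slice (I q : quat R) : Prop :=
  exists a b : R, q = qadd (qreal a) (qmul I (qreal b)).
Definition nonneg_real (q : quat R) : Prop :=
  qi q = 0 /\ qj q = 0 /\ qk q = 0 /\ 0 <= qre q.
End Quat.

Definition semigroup_involution (S : Type) (op : S -> S -> S) (e : S) (star : S -> S) :=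
  [/\ forall a b c, op a (op b c) = op (op a b) c,
      forall a, op e a = a /\ op a e = a,
      forall a, star (star a) = a &
      forall a b, star (op a b) = op (star b) (star a)].

Definition quat_pos_def (R : realType) (S : Type) (op : S -> S -> S) (star : S -> S)
  (phi : S -> quat R) : Prop :=
  forall (k : nat) (s : 'I_k -> S) (q : 'I_k -> quat R),
    nonneg_real (\big[@qadd R/qzero R]_(i < k) \big[@qadd R/qzero R]_(j < k)
                   qmul (qmul (qconj (q i)) (phi (op (star (s i)) (s j)))) (q j)).

Definition complex_pos_def (R : realType) (S : Type) (op : S -> S -> S) (star : S -> S)
  (I : quat R) (phi : S -> quat R) : Prop :=
  forall (k : nat) (s : 'I_k -> S) (c : 'I_k -> quat R),
    (forall i, in_slice I (c i)) ->
    nonneg_real (\big[@qadd R/qzero R]_(i < k) \big[@qadd R/qzero R]_(j < k)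
                   qmul (qmul (qconj (c i)) (c j)) (phi (op (star (s i)) (s j)))).

(* Main.v *)
Set Warnings "-notation-overridden,-ambiguous-paths,-redundant-canonical-projection".
Require Import Defs.
From HB Require Import structures.
From mathcomp Require Import all_boot all_order all_algebra reals.
From mathcomp.algebra_tactics Require Import ring lra.
Set Implicit Arguments. Unset Strict Implicit. Unset Printing Implicit Defensive.
Import Order.TTheory GRing.Theory Num.Theory.
Local Open Scope ring_scope.

Definition q2t (R : realType) (p : quat R) := (qre p, qi p, qj p, qk p).
Definition t2q (R : realType) (t : R * R * R * R) := Quat t.1.1.1 t.1.1.2 t.1.2 t.2.
Lemma q2tK (R : realType) : cancel (@q2t R) (@t2q R). Proof. by case. Qed.
HB.instance Definition _ (R : realType) := Choice.copy (quat R) (can_type (@q2tK R)).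

Lemma quatP (R : realType) (p q : quat R) :
  qre p = qre q -> qi p = qi q -> qj p = qj q -> qk p = qk q -> p = q.
Proof. by case: p => ????; case: q => ???? /= -> -> -> ->. Qed.


Ltac qring0 := apply: quatP => /=; ring.
Section QR.
Variable R : realType.
Local Notation H := (quat R).
Lemma qaddA : associative (@qadd R). Proof. move=> ???; qring0. Qed.
Lemma qaddC : commutative (@qadd R). Proof. move=> ??; qring0. Qed.
Lemma qadd0 : left_id (@qzero R) (@qadd R). Proof. move=> ?; qring0. Qed.
Lemma qaddN : left_inverse (@qzero R) (@qopp R) (@qadd R). Proof. move=> ?; qring0. Qed.
Lemma qmulA : associative (@qmul R). Proof. move=> ???; qring0. Qed.
Lemma qmul1 : left_id (qreal 1) (@qmul R). Proof. move=> ?; qring0. Qed.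
Lemma q1mul : right_id (qreal 1) (@qmul R). Proof. move=> ?; qring0. Qed.
Lemma qmulDl : left_distributive (@qmul R) (@qadd R). Proof. move=> ???; qring0. Qed.
Lemma qmulDr : right_distributive (@qmul R) (@qadd R). Proof. move=> ???; qring0. Qed.
End QR.
HB.instance Definition _ (R : realType) := GRing.isZmodule.Build (quat R) (@qaddA R) (@qaddC R) (@qadd0 R) (@qaddN R).
Lemma q1n0 (R : realType) : (qreal (1:R)) != (0 : quat R).
Proof. apply/eqP => /(congr1 (@qre R)) /= /eqP. by rewrite oner_eq0. Qed.
HB.instance Definition _ (R : realType) := GRing.Zmodule_isNzRing.Build (quat R) (@qmulA R) (@qmul1 R) (@q1mul R) (@qmulDl R) (@qmulDr R) (@q1n0 R).

Lemma bigqE (R : realType) k (F : 'I_k -> quat R) : \big[@qadd R/qzero R]_(i < k) F i = \sum_(i < k) F i.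
Proof. by []. Qed.
Lemma qmulE (R : realType) (p q : quat R) : qmul p q = p * q. Proof. by []. Qed.

Lemma addqE (R : realType) (p q : quat R) : p + q = qadd p q. Proof. by []. Qed.
Lemma mulqE (R : realType) (p q : quat R) : p * q = qmul p q. Proof. by []. Qed.
Lemma oppqE (R : realType) (p : quat R) : - p = qopp p. Proof. by []. Qed.
Lemma zeroqE (R : realType) : 0 = qzero R. Proof. by []. Qed.
Lemma oneqE (R : realType) : 1 = qreal (1 : R). Proof. by []. Qed.
Ltac qsimp := rewrite ?(addqE, mulqE, oppqE, zeroqE, oneqE) /=.
Ltac qring := qsimp; apply: quatP => /=; ring.
Section Main.
Variable R : realType.
Local Notation H := (quat R).
Local Notation cj := (@qconj R).

Lemma cjD (p q : H) : cj (p + q) = cj p + cj q. Proof. qring. Qed.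
Lemma cjM (p q : H) : cj (p * q) = cj q * cj p. Proof. qring. Qed.
Lemma cj0 : cj 0 = 0 :> H. Proof. qring. Qed.
Lemma cj_sum k (F : 'I_k -> H) : cj (\sum_(i < k) F i) = \sum_(i < k) cj (F i).
Proof. exact: (big_morph _ cjD cj0). Qed.

Definition isreal (p : H) := qi p = 0 /\ qj p = 0 /\ qk p = 0.

Variables x y z : R.
Hypothesis hN : x^+2 + y^+2 + z^+2 != 0.
Local Notation I := (Quat 0 x y z).

Definition slice (p : H) := exists a b, p = Quat a (x*b) (y*b) (z*b).

Lemma slice0 : slice 0. Proof. exists 0, 0; qring. Qed.
Lemma sliceI : slice I. Proof. exists 0, 1; qring. Qed.
Lemma sliceD p q : slice p -> slice q -> slice (p + q).
Proof. move=> [a [b ->]] [c [d ->]]; exists (a+c), (b+d); qring. Qed.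
Lemma sliceM p q : slice p -> slice q -> slice (p * q).
Proof. move=> [a [b ->]] [c [d ->]]; exists (a*c - (x^+2+y^+2+z^+2)*b*d), (a*d+b*c); qring. Qed.
Lemma slice_cj p : slice p -> slice (cj p).
Proof. move=> [a [b ->]]; exists a, (-b); qring. Qed.
Lemma slice_comm p q : slice p -> slice q -> p * q = q * p.
Proof. move=> [a [b ->]] [c [d ->]]; qring. Qed.
Lemma slice_sum k (F : 'I_k -> H) : (forall i, slice (F i)) -> slice (\sum_(i < k) F i).
Proof. move=> hF; elim/big_ind: _ => //; [exact: slice0 | exact: sliceD]. Qed.

Lemma herm z1 z2 : slice z1 -> slice z2 -> isreal (z1 + z2) -> isreal (I * (z1 - z2)) -> z2 = cj z1.
Proof.
move=> [a1 [b1 ->]] [a2 [b2 ->]]; qsimp => -[h1 [h2 h3]] [h4 [h5 h6]]; simpl in h1, h2, h3, h4, h5, h6.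
have hb : b1 + b2 = 0.
  apply/eqP; move: hN; apply: contraNT => hb.
  apply/eqP; apply: (mulfI hb). rewrite mulr0.
  have e1 : x * (b1+b2) = 0 by rewrite -[RHS]h1; ring.
  have e2 : y * (b1+b2) = 0 by rewrite -[RHS]h2; ring.
  have e3 : z * (b1+b2) = 0 by rewrite -[RHS]h3; ring.
  transitivity ((x*(b1+b2))*x + (y*(b1+b2))*y + (z*(b1+b2))*z); first ring.
  by rewrite e1 e2 e3; ring.
have ha : a1 - a2 = 0.
  apply/eqP; move: hN; apply: contraNT => ha.
  apply/eqP; apply: (mulfI ha). rewrite mulr0.
  have e1 : x * (a1-a2) = 0 by rewrite -[RHS]h4; ring.
  have e2 : y * (a1-a2) = 0 by rewrite -[RHS]h5; ring.
  have e3 : z * (a1-a2) = 0 by rewrite -[RHS]h6; ring.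
  transitivity ((x*(a1-a2))*x + (y*(a1-a2))*y + (z*(a1-a2))*z); first ring.
  by rewrite e1 e2 e3; ring.
have -> : b2 = - b1 by lra.
have -> : a2 = a1 by lra.
qring.
Qed.


Lemma isreal_mid (a b c d : H) : isreal ((a + b) + (c + d)) -> isreal a -> isreal d -> isreal (b + c).
Proof.
case: a => ????; case: b => ????; case: c => ????; case: d => ????.
rewrite /isreal; qsimp => -[h1 [h2 h3]] [h4 [h5 h6]] [h7 [h8 h9]].
simpl in *; split; [|split]; lra.
Qed.

Lemma nonneg_mid (a b c d : H) : nonneg_real a -> nonneg_real d -> b + c = 0 ->
  nonneg_real ((a + b) + (c + d)).
Proof.
case: a => ????; case: b => ????; case: c => ????; case: d => ????.
rewrite /nonneg_real; qsimp => -[h1 [h2 [h3 h3']]] [h4 [h5 [h6 h6']]] e.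
simpl in *; case: e => e1 e2 e3 e4.
split; [|split; [|split]]; lra.
Qed.

Lemma nonneg_isreal p : nonneg_real p -> isreal p.
Proof. by case=> ? [? [? _]]. Qed.

Lemma in_sliceE p : in_slice I p -> slice p.
Proof. move=> [a [b ->]]; exists a, b; qring0. Qed.

Lemma cjI : cj I = - I. Proof. qring. Qed.

Lemma W2 (w p : H) : nonneg_real p -> nonneg_real (cj w * (p * w)).
Proof.
case: p => a b c d; rewrite /nonneg_real /= => -[-> [-> [-> h]]].
case: w => w0 w1 w2 w3; qsimp.
split; [ring | split; [ring | split; [ring|]]].
have -> : forall e, e = a * (w0^+2 + w1^+2 + w2^+2 + w3^+2) -> 0 <= e.
  by move=> e ->; apply: mulr_ge0 => //; rewrite !addr_ge0 // sqr_ge0.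
by [].
ring.
Qed.

Lemma w_exists : exists w : H, exists U C : H -> H,
  (forall q, slice (U q) /\ slice (C q) /\ q = U q + C q * w) /\
  (forall t, slice t -> t * w + cj (t * w) = 0).
Proof.
have [n0|n0] := eqVneq (y^+2 + z^+2) 0.
- have hy : y = 0.
    apply/eqP; rewrite -sqrf_eq0; apply/eqP; apply: le_anti.
    rewrite sqr_ge0 andbT -n0 lerDl; exact: sqr_ge0.
  have hz : z = 0.
    apply/eqP; rewrite -sqrf_eq0; apply/eqP; apply: le_anti.
    rewrite sqr_ge0 andbT -n0 lerDr; exact: sqr_ge0.
  have hx : x != 0.
    move: hN; rewrite hy hz; apply: contraNneq => ->; rewrite expr0n /=; apply/eqP; ring.
  exists (Quat 0 0 1 0).
  exists (fun q => Quat (qre q) (x * (qi q / x)) (y * (qi q / x)) (z * (qi q / x))).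
  exists (fun q => Quat (qj q) (x * (qk q / x)) (y * (qk q / x)) (z * (qk q / x))).
  split.
  + move=> q; split; [|split].
    * by exists (qre q), (qi q / x).
    * by exists (qj q), (qk q / x).
    * case: q => a b c d; qsimp; apply: quatP => /=; rewrite hy hz; field; exact: hx.
  + move=> t [a [b ->]]; qsimp; apply: quatP => /=; rewrite hy hz; ring.
- exists (Quat 0 0 z (-y)).
  pose b q := (x * qi q + y * qj q + z * qk q) / (x^+2 + y^+2 + z^+2).
  pose al q := (z * qj q - y * qk q) / (y^+2 + z^+2).
  pose be q := (- (y^+2 + z^+2) * qi q + x * y * qj q + x * z * qk q) /
                ((x^+2 + y^+2 + z^+2) * (y^+2 + z^+2)).
  exists (fun q => Quat (qre q) (x * b q) (y * b q) (z * b q)).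
  exists (fun q => Quat (al q) (x * be q) (y * be q) (z * be q)).
  split.
  + move=> q; split; [|split].
    * by exists (qre q), (b q).
    * by exists (al q), (be q).
    * case: q => q0 q1 q2 q3; rewrite /b /al /be; qsimp; apply: quatP => /=;
      field; by rewrite ?hN ?n0.
  + move=> t [a [c ->]]; qsimp; apply: quatP => /=; ring.
Qed.


Section Forms.
Variables (S : Type) (op : S -> S -> S) (star : S -> S) (phi : S -> H).
Hypothesis hphi : forall s, slice (phi s).

Definition B k (s : 'I_k -> S) (p q : 'I_k -> H) :=
  \sum_(i < k) \sum_(j < k) cj (p i) * phi (op (star (s i)) (s j)) * q j.

Lemma B_ext k s (p p' q q' : 'I_k -> H) : p =1 p' -> q =1 q' -> B s p q = B s p' q'.
Proof. by move=> hp hq; apply: eq_bigr => i _; apply: eq_bigr => j _; rewrite hp hq. Qed.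

Lemma BDl k s (p1 p2 q : 'I_k -> H) :
  B s (fun i => p1 i + p2 i) q = B s p1 q + B s p2 q.
Proof.
rewrite /B -big_split; apply: eq_bigr => i _; rewrite -big_split.
by apply: eq_bigr => j _; rewrite cjD !mulrDl.
Qed.

Lemma BDr k s (p q1 q2 : 'I_k -> H) :
  B s p (fun i => q1 i + q2 i) = B s p q1 + B s p q2.
Proof.
rewrite /B -big_split; apply: eq_bigr => i _; rewrite -big_split.
by apply: eq_bigr => j _; rewrite !mulrDr.
Qed.

Lemma BMr k s (p q : 'I_k -> H) w : B s p (fun j => q j * w) = B s p q * w.
Proof.
rewrite /B mulr_suml; apply: eq_bigr => i _; rewrite mulr_suml.
by apply: eq_bigr => j _; rewrite mulrA.
Qed.

Lemma BMl k s (p q : 'I_k -> H) w : B s (fun j => p j * w) q = cj w * B s p q.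
Proof.
rewrite /B mulr_sumr; apply: eq_bigr => i _; rewrite mulr_sumr.
by apply: eq_bigr => j _; rewrite cjM !mulrA.
Qed.

Lemma B_slice k s (p q : 'I_k -> H) : (forall i, slice (p i)) -> (forall i, slice (q i)) ->
  slice (B s p q).
Proof.
move=> hp hq; apply: slice_sum => i; apply: slice_sum => j.
by apply: sliceM; [apply: sliceM; [apply: slice_cj|]|].
Qed.

Lemma complex_sumE k (s : 'I_k -> S) (c : 'I_k -> H) : (forall i, slice (c i)) ->
  \big[@qadd R/qzero R]_(i < k) \big[@qadd R/qzero R]_(j < k)
     qmul (qmul (qconj (c i)) (c j)) (phi (op (star (s i)) (s j))) = B s c c.
Proof.
move=> hc; apply: eq_bigr => i _; apply: eq_bigr => j _.
by rewrite -!mulqE -mulrA (slice_comm (hc j) (hphi _)) mulrA.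
Qed.

Hypothesis hPD : forall k (s : 'I_k -> S) (c : 'I_k -> H), (forall i, slice (c i)) ->
  nonneg_real (B s c c).

Lemma B_herm k s (u c : 'I_k -> H) : (forall i, slice (u i)) -> (forall i, slice (c i)) ->
  B s c u = cj (B s u c).
Proof.
move=> hu hc; apply: herm; try exact: B_slice.
- apply: (@isreal_mid (B s u u) _ _ (B s c c)); last 2 first.
  + exact/nonneg_isreal/hPD.
  + exact/nonneg_isreal/hPD.
  have := hPD s (c := fun i => u i + c i) (fun i => sliceD (hu i) (hc i)).
  by rewrite BDl !BDr => /nonneg_isreal.
- have hcI : forall i, slice (c i * I) by move=> i; apply: sliceM => //; exact: sliceI.
  have := hPD s (c := fun i => u i + c i * I) (fun i => sliceD (hu i) (hcI i)).
  rewrite BDl !BDr => /nonneg_isreal /isreal_mid.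
  move=> /(_ (nonneg_isreal (hPD s hu)) (nonneg_isreal (hPD s hcI))).
  rewrite BMr BMl cjI (slice_comm (B_slice s hu hc) sliceI).
  by rewrite mulrBr mulNr.
Qed.

Lemma quat_pd k (s : 'I_k -> S) (q : 'I_k -> H) : nonneg_real (B s q q).
Proof.
have [w [U [C [hd hw]]]] := w_exists.
pose u i := U (q i); pose c i := C (q i).
have hu : forall i, slice (u i) by move=> i; case: (hd (q i)).
have hc : forall i, slice (c i) by move=> i; case: (hd (q i)) => _ [].
have hq : q =1 (fun i => u i + c i * w) by move=> i; case: (hd (q i)) => _ [_ ->].
rewrite (B_ext s hq hq) BDl !BDr !BMr !BMl (B_herm s hu hc) -cjM -mulrA.
apply: nonneg_mid.
- exact: hPD.
- exact/W2/hPD.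
- apply: hw; exact: B_slice.
Qed.

End Forms.

End Main.

Lemma slice_in (R : realType) (x y z : R) (p : quat R) : slice x y z p -> in_slice (Quat 0 x y z) p.
Proof. move=> [a [b ->]]; exists a, b; qring0. Qed.

Theorem mainTheorem6 (R : realType) (S : Type) (op : S -> S -> S) (e : S)
  (star : S -> S) (I : quat R) (phi : S -> quat R) :
  semigroup_involution op e star ->
  imag_unit I ->
  (forall s, in_slice I (phi s)) ->
  (complex_pos_def op star I phi <-> quat_pos_def op star phi).
Proof.
move=> _ [hI hn] hphi.
case: I hI hn hphi => i0 x y z hI hn hphi.
have hi0 : i0 = 0.
  have := congr1 (@qre R) hI; rewrite /= => h; lra.
subst i0.
have hN : x ^+ 2 + y ^+ 2 + z ^+ 2 != 0.
  move: hn; rewrite /qnorm2 /= => hn; apply/eqP => h.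
  have : (0:R)^+2 + x^+2 + y^+2 + z^+2 = x^+2 + y^+2 + z^+2 by ring.
  by rewrite hn h => /eqP; rewrite oner_eq0.
have hphi' : forall s, slice x y z (phi s) by move=> s; apply: in_sliceE.
split.
- move=> hC k s q.
  have hPD : forall k (s : 'I_k -> S) (c : 'I_k -> quat R), (forall i, slice x y z (c i)) ->
      nonneg_real (B op star phi s c c).
    move=> k' s' c hc; rewrite -(complex_sumE op star hphi' s' hc).
    by apply: hC => i; apply: slice_in.
  exact: (quat_pd hN hphi' hPD s q).
- move=> hQ k s c hc.
  rewrite (complex_sumE op star hphi' s (c := c)); last by move=> i; apply: in_sliceE.
  exact: hQ.
Qed.
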